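(* Let $G=(V,E,H)$ be a HEDG and $X,Y,Z\subseteq V$. Then the following are equivalent: (i) $X\perp^\sigma_G Y\mid Z$; (ii) $X\perp^\sigma_{G^{\mathrm{aug}}}Y\mid Z$; (iii) $X\perp^d_{G^{\mathrm{acy}}}Y\mid Z$; (iv) $X\perp^d_{G^{\mathrm{acag}}}Y\mid Z$; (v) $X\perp^d_{(G^{\mathrm{aug}})^{\mathrm{acy}}}Y\mid Z$; (vi) $X\perp^d_{(G^{\mathrm{acy}})^{\mathrm{aug}}}Y\mid Z$.
   Context: HEDG $G=(V,E,H)$: $V$ finite, $E\subseteq V\times V$ (self-loops allowed), $H$ a simplicial complex on $V$ (contains singletons, closed under subsets), $\tilde H$ its maximal elements; $v\leftrightarrow w$ for distinct $v,w$ with $\{v,w\}\in H$. $\mathrm{Anc}^G,\mathrm{Desc}^G$ (including the node), $\mathrm{Sc}^G(v)=\mathrm{Anc}^G(v)\cap\mathrm{Desc}^G(v)$. A directed graph is regarded as a HEDG whose hyperedges are only singletons. Augmentation $G^{\mathrm{aug}}$: directed graph on $V\cup\{e_F:F\in\tilde H\}$ with edges $E$ together with $e_F\to v$ for all $v\in F$. Acyclification $G^{\mathrm{acy}}=(V,E^{\mathrm{acy}},H^{\mathrm{acy}})$: $v\to w\in E^{\mathrm{acy}}$ iff $v\notin\mathrm{Sc}^G(w)$ and some $w'\in\mathrm{Sc}^G(w)$ has $(v,w')\in E$; $H^{\mathrm{acy}}=\{F'\subseteq\bigcup_{v\in F}\mathrm{Sc}^G(v):F\in H\}$. $(G^{\mathrm{aug}})^{\mathrm{acy}}$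 is the acyclification of $G^{\mathrm{aug}}$, $(G^{\mathrm{acy}})^{\mathrm{aug}}$ the augmentation of $G^{\mathrm{acy}}$, and $G^{\mathrm{acag}}$ is the directed graph with the node set and directed edges of $(G^{\mathrm{aug}})^{\mathrm{acy}}$ but only singleton hyperedges. Paths: node sequences (repetitions allowed, $n\ge1$) with consecutive nodes joined by $\to,\leftarrow,\leftrightarrow$. d-separation $X\perp^d Y\mid Z$: every path between $X$ and $Y$ is $Z$-blocked, meaning an endnode is in $Z$, or an intermediate collider (both adjacent edges have an arrowhead at it) is not an ancestor of $Z$, or an intermediate non-collider is in $Z$. $\sigma$-separation $X\perp^\sigma Y\mid Z$: every path between $X$ and $Y$ is $Z$-$\sigma$-blocked, meaning an endnode is in $Z$, or an intermediate collider is not an ancestor of $Z$, or an intermediate non-collider $v_i\in Z$ has on the path a directed edge $v_i\to v_{i\pm1}$ pointing to a node outside the strongly connected component of $v_i$. *)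

(* Defs.v *)
From mathcomp Require Import all_boot.
Unset Printing Implicit Defensive.

Record hedg (V : finType) := HEDG {
  edges : rel V;               (* directed edges E (self-loops allowed) *)
  hyper : {set {set V}}
}.
Arguments HEDG {V}.
Arguments edges {V}.
Arguments hyper {V}.

Definition simplicial_complex {V : finType} (H : {set {set V}}) : Prop :=
  (forall v : V, [set v] \in H) /\
  (forall F F' : {set V}, F \in H -> F' \subset F -> F' \in H).

Definition is_hedg {V : finType} (G : hedg V) : Prop :=
  simplicial_complex (hyper G).

(* the hyperedge structure of a plain directed graph: only singletons
   (and the empty set, for closure under subsets) *)
Definition singleton_complex {V : finType} : {set {set V}} :=
  [set F : {set V} | #|F| <= 1].

Definition maxH {V : finType} (H : {set {set V}}) : {set {set V}} :=
  [set F in H | [forall F' in H, (F \subset F') ==> (F' == F)]].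

Definition bidir {V : finType} (G : hedg V) (v w : V) : bool :=
  (v != w) && ([set v; w] \in hyper G).

Definition Anc {V : finType} (G : hedg V) (v : V) : {set V} :=
  [set u | connect (edges G) u v].
Definition Desc {V : finType} (G : hedg V) (v : V) : {set V} :=
  [set w | connect (edges G) v w].
Definition Sc {V : finType} (G : hedg V) (v : V) : {set V} :=
  Anc G v :&: Desc G v.

Definition anc_of {V : finType} (G : hedg V) (u : V) (Z : {set V}) : bool :=
  [exists z in Z, u \in Anc G z].

(* Paths.  A path v_0 ... v_n is given by its start v_0 and the list of *)
(* steps (k_i, v_i), i = 1..n, where k_i records which edge joins       *)
(* v_{i-1} and v_i :  Fwd : v_{i-1} -> v_i,  Bwd : v_{i-1} <- v_i,      *)
(* Bi : v_{i-1} <-> v_i.  Repetitions of nodes are allowed, n >= 0      *)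
(* (i.e. at least one node).                                            *)
Inductive ekind := Fwd | Bwd | Bi.

Definition step_ok {V : finType} (G : hedg V) (u : V) (k : ekind) (w : V) : bool :=
  match k with
  | Fwd => edges G u w
  | Bwd => edges G w u
  | Bi => bidir G u w
  end.

Fixpoint is_path {V : finType} (G : hedg V) (u : V) (s : seq (ekind * V)) : bool :=
  match s with
  | [::] => true
  | (k, w) :: s' => step_ok G u k w && is_path G w s'
  end.

Definition pnode {V : finType} (x0 : V) (s : seq (ekind * V)) (i : nat) : V :=
  nth x0 (x0 :: map snd s) i.
(* kind of the edge between node i and node i+1 *)
Definition pkind {V : finType} (s : seq (ekind * V)) (i : nat) : ekind :=
  nth Fwd (map fst s) i.

(* arrowhead at the right end of an edge (i.e. at v_i for the edge
   between v_{i-1} and v_i) *)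
Definition head_at_right (k : ekind) : bool :=
  match k with Fwd | Bi => true | Bwd => false end.
(* arrowhead at the left end of an edge (at v_i for the edge between v_i
   and v_{i+1}) *)
Definition head_at_left (k : ekind) : bool :=
  match k with Bwd | Bi => true | Fwd => false end.

Definition is_Fwd (k : ekind) : bool := if k is Fwd then true else false.
Definition is_Bwd (k : ekind) : bool := if k is Bwd then true else false.

(* intermediate node i (0 < i < n) is a collider *)
Definition collider {V : finType} (s : seq (ekind * V)) (i : nat) : bool :=
  head_at_right (pkind s i.-1) && head_at_left (pkind s i).

Definition d_blocked {V : finType} (G : hedg V) (Z : {set V})
    (x0 : V) (s : seq (ekind * V)) : bool :=
  let n := size s in
  [|| x0 \in Z, last x0 (map snd s) \in Z |
   [exists i : 'I_n, (0 < i) &&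
     (if collider s i then ~~ anc_of G (pnode x0 s i) Z
      else pnode x0 s i \in Z)]].

(* sigma-blocking: a non-collider in Z blocks only if one of its adjacent
   path edges is a directed edge out of it pointing to a node outside its
   strongly connected component *)
Definition sigma_blocked {V : finType} (G : hedg V) (Z : {set V})
    (x0 : V) (s : seq (ekind * V)) : bool :=
  let n := size s in
  [|| x0 \in Z, last x0 (map snd s) \in Z |
   [exists i : 'I_n, (0 < i) &&
     (if collider s i then ~~ anc_of G (pnode x0 s i) Z
      else (pnode x0 s i \in Z) &&
           ((is_Bwd (pkind s i.-1) &&
               (pnode x0 s i.-1 \notin Sc G (pnode x0 s i))) ||
            (is_Fwd (pkind s i) &&
               (pnode x0 s i.+1 \notin Sc G (pnode x0 s i)))))]].

Definition d_sep {V : finType} (G : hedg V) (X Y Z : {set V}) : Prop :=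
  forall (x0 : V) (s : seq (ekind * V)),
    is_path G x0 s -> x0 \in X -> last x0 (map snd s) \in Y ->
    d_blocked G Z x0 s.

Definition sigma_sep {V : finType} (G : hedg V) (X Y Z : {set V}) : Prop :=
  forall (x0 : V) (s : seq (ekind * V)),
    is_path G x0 s -> x0 \in X -> last x0 (map snd s) \in Y ->
    sigma_blocked G Z x0 s.

Definition acy {V : finType} (G : hedg V) : hedg V :=
  HEDG (fun v w => (v \notin Sc G w) && [exists w' in Sc G w, edges G v w'])
       [set F' : {set V} | [exists F in hyper G,
                              F' \subset \bigcup_(v in F) Sc G v]].

(* Augmentation: node set V + { e_F : F maximal hyperedge }            *)
Definition aug_node {V : finType} (H : {set {set V}}) (x : V + {set V}) : bool :=
  match x with inl _ => true | inr F => F \in maxH H end.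

Definition augV {V : finType} (H : {set {set V}}) : finType :=
  {x : V + {set V} | aug_node H x}.

Definition aug_in {V : finType} (H : {set {set V}}) (v : V) : augV H :=
  exist (fun x => aug_node H x) (inl v) isT.

Definition aug_set {V : finType} (H : {set {set V}}) (X : {set V}) : {set augV H} :=
  [set aug_in H v | v in X].

Definition aug_edges {V : finType} (G : hedg V) : rel (augV (hyper G)) :=
  fun a b =>
    match val a, val b with
    | inl v, inl w => edges G v w
    | inr F, inl w => w \in F
    | _, _ => false
    end.

Definition aug {V : finType} (G : hedg V) : hedg (augV (hyper G)) :=
  HEDG (aug_edges G) (@singleton_complex (augV (hyper G))).

Definition acag {V : finType} (G : hedg V) : hedg (augV (hyper G)) :=
  HEDG (edges (acy (aug G))) (@singleton_complex (augV (hyper G))).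

(* Main.v *)
Require Import Defs.
From mathcomp Require Import all_boot.
Set Implicit Arguments.
Unset Strict Implicit.

Definition okd {V : finType} (G : hedg V) (Z : {set V}) (p : V) (kp : ekind) (c : V) (kn : ekind) (nx : V) : bool :=
  if head_at_right kp && head_at_left kn then anc_of G c Z else c \notin Z.

Definition oks {V : finType} (G : hedg V) (Z : {set V}) (p : V) (kp : ekind) (c : V) (kn : ekind) (nx : V) : bool :=
  if head_at_right kp && head_at_left kn then anc_of G c Z
  else ~~ ((c \in Z) && ((is_Bwd kp && (p \notin Sc G c)) || (is_Fwd kn && (nx \notin Sc G c)))).

Section Generic.
Variable V : finType.
Variable G : hedg V.
Variable ok : V -> ekind -> V -> ekind -> V -> bool.

Inductive gconn (y : V) : V -> ekind -> V -> Prop :=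
| gc_end p k : gconn y p k y
| gc_step p k c k' e : step_ok G c k' e -> ok p k c k' e -> gconn y c k' e -> gconn y p k c.

Definition gopen (x y : V) : Prop := x = y \/ exists k c, step_ok G x k c /\ gconn y x k c.

Definition gblocked (Z : {set V}) (x0 : V) (s : seq (ekind * V)) : bool :=
  let n := size s in
  [|| x0 \in Z, last x0 (map snd s) \in Z |
   [exists i : 'I_n, (0 < i) && ~~ ok (pnode x0 s i.-1) (pkind s i.-1) (pnode x0 s i) (pkind s i) (pnode x0 s i.+1)]].

Lemma pnode_cons (p : V) k c (s : seq (ekind * V)) i : i <= size s -> pnode p ((k, c) :: s) i.+1 = pnode c s i.
Proof. move=> hi; rewrite /pnode /=; apply: set_nth_default; by rewrite /= size_map ltnS. Qed.

Definition allok (p : V) k (c : V) (s : seq (ekind * V)) := forall i, 0 < i < (size s).+1 ->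
  ok (pnode p ((k,c)::s) i.-1) (pkind ((k,c)::s) i.-1) (pnode p ((k,c)::s) i)
     (pkind ((k,c)::s) i) (pnode p ((k,c)::s) i.+1).

Lemma allok_cons p k c k' e s : allok p k c ((k',e)::s) <-> ok p k c k' e /\ allok c k' e s.
Proof.
split.
- move=> h; split; first by have := h 1 isT.
  move=> [|j] //= hj; have := h j.+2; rewrite /= ltnS => /(_ hj).
  rewrite (pnode_cons p k c); last by rewrite /= ltnW // ltnW.
  rewrite (pnode_cons p k c); last by rewrite /= ltnW.
  rewrite (pnode_cons p k c) //.
- move=> [h1 h2] [|[|j]] //= hj.
  have := h2 j.+1; rewrite /= ltnS => /(_ hj).
  rewrite (pnode_cons p k c); last by rewrite /= ltnW // ltnW.
  rewrite (pnode_cons p k c); last by rewrite /= ltnW.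
  rewrite (pnode_cons p k c) //.
Qed.

Lemma gconn_of_path y p k c s : is_path G c s -> last c (map snd s) = y -> allok p k c s -> gconn y p k c.
Proof.
elim: s p k c => [|[k' e] s IH] p k c /=.
  by move=> _ <- _; apply: gc_end.
move=> /andP [hs hp] hl /allok_cons [h1 h2].
apply: gc_step hs h1 _; exact: IH.
Qed.

Lemma path_of_gconn y p k c : gconn y p k c -> exists s, [/\ is_path G c s, last c (map snd s) = y & allok p k c s].
Proof.
elim=> {p k c} [p k|p k c k' e hs ho _ [s [h1 h2 h3]]].
  exists [::]; split => // i /andP [i0 hi]; by case: i i0 hi.
exists ((k', e) :: s); split => //=; first by rewrite hs.
by apply/allok_cons.
Qed.

Lemma sep_gconn (Z X Y : {set V}) :
  (forall x0 s, is_path G x0 s -> x0 \in X -> last x0 (map snd s) \in Y -> gblocked Z x0 s) <->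
  (forall x y, x \in X -> y \in Y -> x \notin Z -> y \notin Z -> ~ gopen x y).
Proof.
split.
- move=> H x y hx hy hxz hyz [exy|[k [c [hs hc]]]].
    subst y; have := H x [::] isT hx hy; rewrite /gblocked /= (negbTE hxz) /=.
    by move=> /existsP [[i hi]].
  have [s [h1 h2 h3]] := path_of_gconn hc.
  have := H x ((k,c)::s); rewrite /= hs h1 /= h2 => /(_ isT hx hy).
  rewrite /gblocked /= (negbTE hxz) h2 (negbTE hyz) /= => /existsP [[i hi]] /= /andP [i0].
  by rewrite h3 // i0 hi.
- move=> H x0 s hp hx hy; apply/negPn/negP => hnb.
  rewrite /gblocked !negb_or in hnb; case/and3P: hnb => hxz hyz /existsPn hall.
  apply: (H x0 _ hx hy hxz hyz).
  case: s hp hy hyz hall => [|[k c] s] /= hp hy hyz hall; first by left.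
  right; exists k, c; case/andP: hp => hs hp; split => //.
  apply: gconn_of_path hp erefl _ => i /andP [i0 hi].
  have := hall (Ordinal hi); by rewrite /= i0 negbK.
Qed.

End Generic.

Lemma d_sep_g (V : finType) (G : hedg V) X Y Z :
  d_sep G X Y Z <-> (forall x y, x \in X -> y \in Y -> x \notin Z -> y \notin Z -> ~ gopen G (okd G Z) x y).
Proof.
apply: (iff_trans _ (sep_gconn G (okd G Z) Z X Y)); rewrite /d_sep; split => H x0 s h1 h2 h3; have := H x0 s h1 h2 h3;
rewrite /d_blocked /gblocked; congr (_ || (_ || _)); apply: eq_existsb => i;
rewrite /okd /collider; by case: ifP; rewrite ?negbK.
Qed.

Lemma sigma_sep_g (V : finType) (G : hedg V) X Y Z :
  sigma_sep G X Y Z <-> (forall x y, x \in X -> y \in Y -> x \notin Z -> y \notin Z -> ~ gopen G (oks G Z) x y).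
Proof.
apply: (iff_trans _ (sep_gconn G (oks G Z) Z X Y)); rewrite /sigma_sep; split => H x0 s h1 h2 h3; have := H x0 s h1 h2 h3;
rewrite /sigma_blocked /gblocked; congr (_ || (_ || _)); apply: eq_existsb => i;
rewrite /oks /collider; by case: ifP; rewrite ?negbK.
Qed.

Lemma inSc (V : finType) (G : hedg V) u v : (u \in Sc G v) = connect (edges G) u v && connect (edges G) v u.
Proof. by rewrite /Sc /Anc /Desc !inE. Qed.

Lemma Sc_refl (V : finType) (G : hedg V) v : v \in Sc G v.
Proof. by rewrite inSc connect0. Qed.

Lemma Sc_sym (V : finType) (G : hedg V) u v : (u \in Sc G v) = (v \in Sc G u).
Proof. by rewrite !inSc andbC. Qed.

Lemma Sc_trans (V : finType) (G : hedg V) u v w : u \in Sc G v -> v \in Sc G w -> u \in Sc G w.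
Proof.
rewrite !inSc => /andP [a b] /andP [c d]; apply/andP; split; apply: connect_trans; eauto.
Qed.

Lemma Sc_eq (V : finType) (G : hedg V) u v : u \in Sc G v -> Sc G u = Sc G v.
Proof.
move=> h; apply/setP => w; apply/idP/idP => hw.
  exact: Sc_trans hw h.
by apply: Sc_trans hw _; rewrite Sc_sym.
Qed.

Lemma anc_ofP (V : finType) (G : hedg V) c (Z : {set V}) : reflect (exists2 z, z \in Z & connect (edges G) c z) (anc_of G c Z).
Proof.
apply: (iffP existsP) => [[z /andP [hz hc]]|[z hz hc]]; exists z => //.
  by rewrite /Anc inE in hc.
by rewrite hz /Anc inE.
Qed.

Section DConn.
Variable V : finType.
Variable G : hedg V.
Variable Z : {set V}.
Variable y : V.

Inductive dconn : bool -> V -> Prop :=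
| dc_end h : dconn h y
| dc_step h d k e : step_ok G d k e ->
    (if h && head_at_left k then anc_of G d Z else d \notin Z) ->
    dconn (head_at_right k) e -> dconn h d.

Lemma gconn_dconn p k c : gconn G (okd G Z) y p k c <-> dconn (head_at_right k) c.
Proof.
split.
  elim=> {p k c} [p k|p k c k' e hs ho _ IH]; first exact: dc_end.
  exact: dc_step hs ho IH.
move=> h; have: forall b c, dconn b c -> forall p k, head_at_right k = b -> gconn G (okd G Z) y p k c.
  move=> b c0; elim=> {b c0} [h0|h0 d k' e hs ho _ IH] p0 k0 hk; first exact: gc_end.
  apply: gc_step hs _ (IH d k' erefl); by rewrite /okd hk.
by move=> /(_ _ _ h p k erefl).
Qed.

Lemma gopen_dconn x : x \notin Z -> (gopen G (okd G Z) x y <-> dconn false x).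
Proof.
move=> hx; split.
  case=> [->|[k [c [hs hc]]]]; first exact: dc_end.
  apply: (dc_step hs); first by rewrite /=.
  exact: (proj1 (gconn_dconn _ _ _) hc).
case/(gconn_dconn x Bwd)=> [|p k c k' e hs ho hc]; first by left.
right; exists k', e; split => //.
Qed.

End DConn.

Lemma gopen_sconn (V : finType) (G : hedg V) (Z : {set V}) x y : x \notin Z ->
  (gopen G (oks G Z) x y <-> gconn G (oks G Z) y x Bwd x).
Proof.
move=> hx; split.
  case=> [<-|[k [c [hs hc]]]]; first exact: gc_end.
  apply: gc_step hs _ hc; by rewrite /oks /= (negbTE hx).
case=> [p k|p k c k' e hs ho hc]; first by left.
right; exists k', e; split => //.
Qed.

Lemma sub2set (V : finType) (d e : V) (S : {set V}) : ([set d; e] \subset S) = (d \in S) && (e \in S).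
Proof. by rewrite subUset !sub1set. Qed.

Section AcyBasics.
Variable V : finType.
Variable G : hedg V.

Lemma acy_edgeI v w w' : v \notin Sc G w -> w' \in Sc G w -> edges G v w' -> edges (acy G) v w.
Proof. move=> h1 h2 h3; rewrite /acy /= h1 /=; apply/existsP; exists w'; by rewrite h2. Qed.

Lemma acy_edgeE v w : edges (acy G) v w -> v \notin Sc G w /\ exists2 w', w' \in Sc G w & edges G v w'.
Proof. rewrite /acy /= => /andP [h1 /existsP [w' /andP [h2 h3]]]; split => //; by exists w'. Qed.

Lemma acy_connect u w : connect (edges (acy G)) u w -> connect (edges G) u w.
Proof.
apply: connect_sub => a b /acy_edgeE [_ [w' hw' hb]].
apply: connect_trans (connect1 hb) _; by move: hw'; rewrite inSc => /andP [].
Qed.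

Lemma acy_anc s (Z : {set V}) : anc_of (acy G) s Z -> anc_of G s Z.
Proof. move/anc_ofP => [z hz hc]; apply/anc_ofP; exists z => //; exact: acy_connect. Qed.

Lemma anc_lift c z : connect (edges G) c z -> exists2 c', c' \in Sc G c & connect (edges (acy G)) c' z.
Proof.
move/connectP => [s hp ->]; elim: s c hp => [|d s IH] c /=.
  by move=> _; exists c; rewrite ?Sc_refl.
move=> /andP [hcd hp]; have [d' hd' hc'] := IH d hp.
case: (boolP (c \in Sc G d)) => hcd'.
  by exists d' => //; rewrite (Sc_eq hcd').
exists c; first exact: Sc_refl.
apply: connect_trans hc'; apply: connect1; apply: (acy_edgeI (w' := d)).
- by rewrite (Sc_eq hd').
- by rewrite Sc_sym.
- done.
Qed.

Hypothesis hG : is_hedg G.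

Lemma bidir_sc c d e : d != e -> d \in Sc G c -> e \in Sc G c -> bidir (acy G) d e.
Proof.
move=> hde hd he; rewrite /bidir hde /acy /= inE; apply/existsP; exists [set c].
rewrite hG.1 /= sub2set; apply/andP; split; apply/bigcupP; exists c; by rewrite ?in_set1.
Qed.

Lemma bidir_cross c e d c' : bidir G c e -> d \in Sc G c -> c' \in Sc G e -> d != c' -> bidir (acy G) d c'.
Proof.
move=> /andP [_ hce] hd hc' hdc; rewrite /bidir hdc /acy /= inE; apply/existsP; exists [set c; e].
rewrite hce /= sub2set; apply/andP; split; apply/bigcupP.
  by exists c; rewrite // !inE eqxx.
by exists e; rewrite // !inE eqxx orbT.
Qed.

Lemma bidir_acyE d e : bidir (acy G) d e ->
  exists a b, [/\ d \in Sc G a, e \in Sc G b & (a = b \/ bidir G a b)].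
Proof.
rewrite /bidir /acy /= inE => /andP [hde /existsP [F /andP [hF]]].
rewrite sub2set => /andP [/bigcupP [a ha hda] /bigcupP [b hb heb]].
exists a, b; split => //; case: (eqVneq a b) => hab; [by left|right].
apply/andP; split => //; apply: hG.2 hF _; by rewrite sub2set ha hb.
Qed.

End AcyBasics.

Section Dir1.
Variable V : finType.
Variable G : hedg V.
Hypothesis hG : is_hedg G.
Variable Z : {set V}.
Variable y : V.
Hypothesis hyZ : y \notin Z.

Local Notation A := (acy G).
Local Notation D := (dconn A Z y).

Definition QE c := y \in Sc G c.
Definition QT c := exists w, [/\ w \in Sc G c, w \notin Z & exists e, edges A w e /\ D true e].
Definition QH1 c := forall d, d \in Sc G c -> exists k e, [/\ head_at_left k, step_ok A d k e & D (head_at_right k) e].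
Definition QHs c := exists2 s, s \in Sc G c & anc_of A s Z.
Definition Q k c := QE c \/ QT c \/ (QH1 c /\ (head_at_right k -> QHs c)).

Lemma L1 k e : Q k e -> head_at_right k -> exists2 c', c' \in Sc G e & D true c'.
Proof.
case=> [hE|[[w [hw hwZ [e' [he' hD]]]]|[hH hs]]] hk.
- by exists y => //; apply: dc_end.
- exists w => //; apply: (dc_step (k := Fwd) he') => //=.
- have [s hs1 hs2] := hs hk; exists s => //.
  have [k' [e' [hk' hst hD]]] := hH s hs1.
  by apply: (dc_step hst) => //; rewrite hk'.
Qed.

Lemma L2 k e : Q k e -> e \notin Z -> D false e.
Proof.
move=> hQ heZ; case: hQ => [hE|[[w [hw hwZ [e' [he' hD]]]]|[hH _]]].
- case: (eqVneq e y) => [->|hey]; first exact: dc_end.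
  apply: (dc_step (k := Bi) (e := y)) => //; last exact: dc_end.
  by apply: (bidir_sc hG hey (Sc_refl _ _)).
- have Dw : forall h, D h w by move=> h; apply: (dc_step (k := Fwd) he'); rewrite ?andbF.
  case: (eqVneq e w) => [->|hew]; first exact: Dw.
  apply: (dc_step (k := Bi) (e := w)) => //.
  by apply: (bidir_sc hG hew (Sc_refl _ _)).
- have [k' [e' [hk' hst hD]]] := hH e (Sc_refl _ _).
  by apply: (dc_step hst).
Qed.

Local Notation S := (gconn G (oks G Z) y).

Lemma Rigid0 p k c : S p k c -> k = Bwd -> p \notin Sc G c -> c \notin Z.
Proof.
case=> [p0 k0|p0 k0 c0 k' e hs ho _] hk hp; first exact: hyZ.
subst k0; apply/negP => hc; move/negP: ho; apply; by rewrite /= hc hp.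
Qed.

Lemma Rigid p c : S p Bwd c -> p \notin Sc G c -> c \notin Z.
Proof. move=> h; exact: Rigid0 h erefl. Qed.

Lemma Hs_of_anc c : anc_of G c Z -> QHs c.
Proof.
move/anc_ofP => [z hz /anc_lift [c' hc' hc'z]]; exists c' => //.
apply/anc_ofP; by exists z.
Qed.

Lemma Q_of_S p k c : S p k c -> Q k c.
Proof.
elim=> {p k c} [p k|p k c k' e hs ho hc IH]; first by left; exact: Sc_refl.
case: (boolP (e \in Sc G c)) => hec.
- have eqS := Sc_eq hec.
  rewrite /Q /QE /QT /QH1 /QHs eqS in IH *.
  case: IH => [hE|[hT|[hH hs']]]; [by left|by right; left|right; right].
  split => // hk; case hk' : (head_at_left k').
    by apply: Hs_of_anc; move: ho; rewrite /oks hk hk'.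
  by apply: hs'; case: k' hk' {hs ho hc}.
- have hce : c \notin Sc G e by rewrite Sc_sym.
  case: k' hs ho hc IH => hs ho hc IH.
  +
    right; left; exists c; split; first exact: Sc_refl.
      apply/negP => hcZ; move: ho; rewrite /oks andbF /= hcZ /= hec orbT //.
    have [c' hc' hD] := L1 IH isT; exists c'; split => //.
    apply: (acy_edgeI (w' := e)) => //.
      by rewrite (Sc_eq hc').
    by rewrite Sc_sym.
  +
    right; right; split.
      move=> d hd; exists Bwd, e; split => //=.
        apply: (acy_edgeI (w' := c)) => //.
          by rewrite (Sc_eq hd).
        by rewrite Sc_sym.
      apply: (L2 IH); exact: Rigid hc hce.
    move=> hk; apply: Hs_of_anc; move: ho; by rewrite /oks hk.
  +
    right; right; split.
      move=> d hd; have [c' hc' hD] := L1 IH isT; exists Bi, c'; split => //=.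
      apply: (bidir_cross hs hd hc'); apply/negP => /eqP hdc; subst d.
      move/negP: hec; apply; apply: Sc_trans hd; by rewrite Sc_sym.
    move=> hk; apply: Hs_of_anc; move: ho; by rewrite /oks hk.
Qed.

Lemma dir1 x : x \notin Z -> gopen G (oks G Z) x y -> gopen A (okd A Z) x y.
Proof.
move=> hx /(gopen_sconn G y hx) hS; apply/(gopen_dconn A y hx).
apply: (L2 (Q_of_S hS)) hx.
Qed.

End Dir1.

Section Dir2.
Variable V : finType.
Variable G : hedg V.
Hypothesis hG : is_hedg G.
Variable Z : {set V}.
Variable y : V.

Local Notation A := (acy G).
Local Notation D := (dconn A Z y).
Local Notation S := (gconn G (oks G Z) y).

Lemma oks_tr h ka p k d kn nx : head_at_right k = h ->
  (if h && head_at_left ka then anc_of A d Z else d \notin Z) ->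
  head_at_left kn = head_at_left ka -> oks G Z p k d kn nx.
Proof.
move=> <- ho hkn; rewrite /oks hkn; case: ifP => hc; rewrite hc in ho.
  exact: acy_anc.
by rewrite (negbTE ho).
Qed.

Lemma oks_tr2 h ka p k d nx : head_at_right k = h ->
  (if h && head_at_left ka then anc_of A d Z else d \notin Z) ->
  nx \in Sc G d -> oks G Z p k d Fwd nx.
Proof.
move=> hk ho hnx; rewrite /oks andbF /= hnx orbF.
case: k hk => hk /=; rewrite ?andbF //; subst h; by rewrite (negbTE ho).
Qed.

Definition PP x := forall p k, head_at_right k -> S p k x.

Lemma PP_step b c1 : edges G b c1 -> c1 \in Sc G b -> PP c1 -> PP b.
Proof.
move=> he hc hP p k hk; apply: (gc_step (k' := Fwd) (e := c1)) => //.
  rewrite /oks andbF /= hc /= orbF; case: k hk => // _; by rewrite /= andbF.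
exact: hP.
Qed.

Lemma FwdStep b e : connect (edges G) b e -> connect (edges G) e b -> PP e ->
  b = e \/ exists c1, [/\ edges G b c1, c1 \in Sc G b & PP c1].
Proof.
move=> /connectP [s hp ->] {e}; elim: s b hp => [|c1 s IH] b /=; first by left.
move=> /andP [hb hp] heb hP; right; exists c1.
have hc1 : c1 \in Sc G b.
  rewrite inSc (connect1 hb) andbT; apply: connect_trans _ heb.
  by apply/connectP; exists s.
split => //.
have heb' : connect (edges G) (last c1 s) c1 by apply: connect_trans heb (connect1 hb).
case: (IH c1 hp heb' hP) => [->|[c2 [h1 h2 h3]]]; first exact: hP.
exact: PP_step h1 h2 h3.
Qed.

Lemma FwdChain b e : connect (edges G) b e -> connect (edges G) e b -> PP e -> PP b.
Proof.
move=> h1 h2 hP; case: (FwdStep h1 h2 hP) => [->//|[c1 [he hc hc1]]]; exact: PP_step he hc hc1.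
Qed.

Definition BB x := exists kx nx, [/\ head_at_left kx, step_ok G x kx nx & S x kx nx].

Lemma BwdChain a d : connect (edges G) a d -> connect (edges G) d a -> BB a -> BB d.
Proof.
move=> /connectP [s hp ->] {d}; elim: s a hp => [|c1 s IH] a //= /andP [ha hp] hda hB.
apply: (IH c1 hp); first by apply: connect_trans hda (connect1 ha).
exists Bwd, a; split => //.
have [kx [nx [hk hst hS]]] := hB.
apply: (gc_step hst) => //; rewrite /oks /=.
have -> : c1 \in Sc G a.
  rewrite inSc (connect1 ha) andbT; apply: connect_trans _ hda.
  by apply/connectP; exists s.
by case: kx hk {hst hS} => //=; rewrite ?andbF.
Qed.

Lemma S_of_D h d : D h d -> forall p k, head_at_right k = h -> S p k d.
Proof.
elim=> {h d} [h|h d ka e hs ho _ IH] p k hk; first exact: gc_end.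
case: ka hs ho IH => hs ho IH.
-
  have [hde [e' he' hde']] := acy_edgeE hs.
  have hPe : PP e by move=> p0 k0 hk0; apply: IH.
  move: he'; rewrite inSc => /andP [c1 c2].
  have hPe' := FwdChain c1 c2 hPe.
  apply: (gc_step (k' := Fwd) (e := e')) => //.
    move: (@oks_tr h Fwd p k d Fwd e' hk ho erefl). done.
  exact: hPe'.
-
  have [hed [d' hd' hed']] := acy_edgeE hs.
  have hB : BB d'.
    exists Bwd, e; split => //; exact: IH.
  move: hd'; rewrite inSc => /andP [c1 c2].
  have [kx [nx [hkx hst hS]]] := BwdChain c1 c2 hB.
  apply: (gc_step hst _ hS); apply: (@oks_tr h Bwd p k d kx nx hk ho); by rewrite hkx.
-
  have hPe : PP e by move=> p0 k0 hk0; apply: IH.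
  have hde : d != e by case/andP: hs.
  have [a [b [hda heb hab]]] := bidir_acyE hG hs.
  case: (boolP (e \in Sc G d)) => hed.
    move: (hed); rewrite inSc => /andP [c1 c2].
    case: (FwdStep c2 c1 hPe) => [hde'|[c [he hc hPc]]].
      by rewrite hde' eqxx in hde.
    apply: (gc_step (k' := Fwd) (e := c)) => //; last exact: hPc.
    exact: (@oks_tr2 h Bi p k d c hk ho hc).
  case: hab => [hab|hab].
    subst b; move/negP: hed; case; apply: Sc_trans heb _; by rewrite Sc_sym.
  move: heb; rewrite inSc => /andP [c1 c2].
  have hPb := FwdChain c2 c1 hPe.
  have hB : BB a.
    exists Bi, b; split => //; exact: hPb.
  move: hda; rewrite inSc => /andP [c3 c4].
  have [kx [nx [hkx hst hS]]] := BwdChain c4 c3 hB.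
  apply: (gc_step hst _ hS); apply: (@oks_tr h Bi p k d kx nx hk ho); by rewrite hkx.
Qed.

Lemma dir2 x : x \notin Z -> gopen A (okd A Z) x y -> gopen G (oks G Z) x y.
Proof.
move=> hx /(gopen_dconn A y hx) hD; apply/(gopen_sconn G y hx).
exact: S_of_D hD x Bwd erefl.
Qed.

End Dir2.

Theorem thmB (V : finType) (G : hedg V) (X Y Z : {set V}) : is_hedg G ->
  (sigma_sep G X Y Z <-> d_sep (acy G) X Y Z).
Proof.
move=> hG; apply: (iff_trans (sigma_sep_g G X Y Z)); apply: iff_sym.
apply: (iff_trans (d_sep_g (acy G) X Y Z)); apply: iff_sym; split => H x y hx hy hxZ hyZ ho.
  exact: (H x y hx hy hxZ hyZ (dir2 hG hxZ ho)).
exact: (H x y hx hy hxZ hyZ (dir1 hG hyZ hxZ ho)).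
Qed.

Section Latent.
Variables (V W : finType) (H1 : hedg V) (H2 : hedg W) (i : V -> W).
Hypothesis Hinj : injective i.
Hypothesis Hcov : forall b, (exists v, b = i v) \/
   [/\ forall v, b <> i v, forall a, ~~ edges H2 a b & forall a, ~~ bidir H2 a b /\ ~~ bidir H2 b a].
Hypothesis Hedge : forall u w, edges H2 (i u) (i w) = edges H1 u w.
Hypothesis Hbi21 : forall u w, bidir H2 (i u) (i w) -> bidir H1 u w.
Hypothesis Hbi12 : forall u w, bidir H1 u w -> bidir H2 (i u) (i w) \/
   exists l, [/\ forall v, l <> i v, edges H2 l (i u) & edges H2 l (i w)].
Hypothesis Hlat : forall l u w, (forall v, l <> i v) -> edges H2 l (i u) -> edges H2 l (i w) -> u != w -> bidir H1 u w.

Lemma lat_connect u w : connect (edges H2) (i u) (i w) = connect (edges H1) u w.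
Proof.
apply/idP/idP.
  move/connectP => [s hp hl]; elim: s u hp hl => [|b s IH] u /=.
    by move=> _ /Hinj ->.
  move=> /andP [hb hp] hl; case: (Hcov b) => [[v hv]|[_ hn _]]; last by rewrite (negbTE (hn _)) in hb.
  subst b; apply: connect_trans (connect1 _) (IH v hp hl); by rewrite -Hedge.
move/connectP => [s hp ->]; elim: s u hp => [|v s IH] u /=; first by rewrite connect0.
move=> /andP [hb hp]; apply: connect_trans (connect1 _) (IH v hp); by rewrite Hedge.
Qed.

Variable Z : {set V}.
Local Notation Z2 := (i @: Z).

Lemma lat_anc u : anc_of H2 (i u) Z2 = anc_of H1 u Z.
Proof.
apply/anc_ofP/anc_ofP => [[z2 /imsetP [z hz ->] hc]|[z hz hc]].
  by exists z => //; rewrite -lat_connect.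
by exists (i z); [exact: imset_f | rewrite lat_connect].
Qed.

Lemma lat_mem u : (i u \in Z2) = (u \in Z).
Proof. exact: mem_imset. Qed.

Lemma lat_notmem l : (forall v, l <> i v) -> l \notin Z2.
Proof. move=> hl; apply/negP => /imsetP [z _ hz]; exact: hl hz. Qed.

Lemma lat_ok h k u : (if h && head_at_left k then anc_of H2 (i u) Z2 else i u \notin Z2) =
  (if h && head_at_left k then anc_of H1 u Z else u \notin Z).
Proof. by rewrite lat_anc lat_mem. Qed.

Variable y : V.

Lemma lat12 h u : dconn H1 Z y h u -> dconn H2 Z2 (i y) h (i u).
Proof.
elim=> {h u} [h|h u k w hs ho _ IH]; first exact: dc_end.
case: k hs ho IH => hs ho IH.
- apply: (dc_step (k := Fwd) (e := i w)) => //; by rewrite ?lat_ok /= ?Hedge.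
- apply: (dc_step (k := Bwd) (e := i w)) => //; by rewrite ?lat_ok /= ?Hedge.
- case: (Hbi12 hs) => [hb|[l [hl h1 h2]]].
    apply: (dc_step (k := Bi) (e := i w)) => //; by rewrite lat_ok.
  apply: (dc_step (k := Bwd) (e := l)) => //; first by rewrite lat_ok.
  apply: (dc_step (k := Fwd) (e := i w)) => //=; exact: lat_notmem.
Qed.

Lemma merge h u : dconn H1 Z y true u -> (if h then anc_of H1 u Z else u \notin Z) -> dconn H1 Z y h u.
Proof.
move=> hD hm; inversion hD as [h0 E1 E2|h0 d kn nx hs ho hd E1 E2]; first exact: dc_end.
subst; apply: (dc_step hs _ hd); move: ho hm; case: h; case: (head_at_left kn) => /= a b //.
Qed.

Definition Phi h c := (forall u, c = i u -> dconn H1 Z y h u) /\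
  ((forall v, c <> i v) -> exists2 b0, edges H2 c (i b0) & dconn H1 Z y true b0).

Lemma lat21 h c : dconn H2 Z2 (i y) h c -> Phi h c.
Proof.
elim=> {h c} [h|h c k e hs ho _ [IH1 IH2]].
  split; first by move=> u /Hinj ->; exact: dc_end.
  by move=> /(_ y).
split.
- move=> u hu; subst c; case: (Hcov e) => [[v hv]|[hl hn hb]].
    subst e; apply: (dc_step (k := k) (e := v)); last exact: IH1.
      case: k hs {ho IH1 IH2} => //=; [by rewrite Hedge | by rewrite Hedge | exact: Hbi21].
    by rewrite -lat_ok.
  case: k hs ho {IH1} => hs ho.
  + by rewrite /= (negbTE (hn _)) in hs.
  + have [b0 hb0 hD] := IH2 hl.
    case: (eqVneq u b0) => [hub|hub]; first subst b0.
      apply: merge hD _; move: ho; rewrite lat_ok /=; by case: h.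
    apply: (dc_step (k := Bi) (e := b0)); [exact: Hlat hl hs hb0 hub | by move: ho; rewrite lat_ok | exact: hD].
  + by rewrite /= (negbTE (hb _).1) in hs.
- move=> hc; case: k hs ho IH1 IH2 => hs ho IH1 IH2.
  + case: (Hcov e) => [[v hv]|[_ hn _]].
      subst e; exists v => //; exact: IH1.
    by rewrite /= (negbTE (hn _)) in hs.
  + case: (Hcov c) => [[v hv]|[_ hn _]]; first by case: (hc v).
    by rewrite /= (negbTE (hn _)) in hs.
  + case: (Hcov c) => [[v hv]|[_ _ hb]]; first by case: (hc v).
    by rewrite /= (negbTE (hb _).2) in hs.
Qed.

End Latent.

Theorem thmL (V W : finType) (H1 : hedg V) (H2 : hedg W) (i : V -> W) :
  injective i ->
  (forall b, (exists v, b = i v) \/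
   [/\ forall v, b <> i v, forall a, ~~ edges H2 a b & forall a, ~~ bidir H2 a b /\ ~~ bidir H2 b a]) ->
  (forall u w, edges H2 (i u) (i w) = edges H1 u w) ->
  (forall u w, bidir H2 (i u) (i w) -> bidir H1 u w) ->
  (forall u w, bidir H1 u w -> bidir H2 (i u) (i w) \/
   exists l, [/\ forall v, l <> i v, edges H2 l (i u) & edges H2 l (i w)]) ->
  (forall l u w, (forall v, l <> i v) -> edges H2 l (i u) -> edges H2 l (i w) -> u != w -> bidir H1 u w) ->
  forall X Y Z : {set V}, d_sep H1 X Y Z <-> d_sep H2 (i @: X) (i @: Y) (i @: Z).
Proof.
move=> Hinj Hcov Hedge Hbi21 Hbi12 Hlat X Y Z.
apply: (iff_trans (d_sep_g H1 X Y Z)); apply: iff_sym.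
apply: (iff_trans (d_sep_g H2 _ _ _)); apply: iff_sym; split => H.
- move=> x2 y2 /imsetP [x hx ->] /imsetP [y hy ->]; rewrite !(lat_mem Hinj) => hxZ hyZ.
  move/(gopen_dconn H2 (i y) (x := i x)); rewrite (lat_mem Hinj) => /(_ hxZ) hD.
  apply: (H x y hx hy hxZ hyZ); apply/(gopen_dconn H1 y hxZ).
  exact: (lat21 Hinj Hcov Hedge Hbi21 Hlat hD).1 x erefl.
- move=> x y hx hy hxZ hyZ /(gopen_dconn H1 y hxZ) hD.
  apply: (H (i x) (i y) (imset_f _ hx) (imset_f _ hy)); rewrite ?(lat_mem Hinj) //.
  apply/(gopen_dconn H2 (i y)); first by rewrite (lat_mem Hinj).
  exact: (lat12 Hinj Hcov Hedge Hbi12 hD).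
Qed.

Lemma maxH_sub (V : finType) (H : {set {set V}}) F : F \in maxH H -> F \in H.
Proof. by rewrite inE => /andP []. Qed.

Lemma maxH_ex (V : finType) (H : {set {set V}}) F : F \in H -> exists2 F', F' \in maxH H & F \subset F'.
Proof.
move=> hF; pose P := [pred F' : {set V} | (F' \in H) && (F \subset F')].
have P0 : P F by rewrite /= hF subxx.
case: (arg_maxnP (fun F' : {set V} => #|F'|) P0) => F' /andP [hF' hsub] hmax.
exists F' => //; rewrite inE hF' /=; apply/forallP => F''; apply/implyP => hF''.
apply/implyP => hs; rewrite eq_sym eqEcard hs /=; apply: hmax.
by rewrite /= hF'' (subset_trans hsub hs).
Qed.

Lemma bidir_single (V : finType) (e : rel V) a b : bidir (HEDG e singleton_complex) a b = false.
Proof. rewrite /bidir /= inE cards2; by case: (a != b). Qed.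

Lemma single_hedg (V : finType) (e : rel V) : is_hedg (HEDG e singleton_complex).
Proof.
split => [v|F F']; first by rewrite /= inE cards1.
rewrite /= !inE => h1 h2; apply: leq_trans h1; exact: subset_leq_card.
Qed.

Section Aug.
Variable V : finType.
Variable H : {set {set V}}.

Lemma aug_in_inj : injective (aug_in H).
Proof. by move=> u w /(congr1 val) [->]. Qed.

Definition islat (b : augV H) := if val b is inr _ then true else false.

Lemma aug_cover (b : augV H) : (exists v, b = aug_in H v) \/ (islat b /\ forall v, b <> aug_in H v).
Proof.
case: b => [[v|F] pf].
  left; exists v; exact: val_inj.
by right; split => // v /(congr1 val).
Qed.

Lemma lat_not_img (b : augV H) : islat b -> forall v, b <> aug_in H v.
Proof. by move=> hb v hv; subst b. Qed.

End Aug.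

Section AugG.
Variable V : finType.
Variable G : hedg V.
Local Notation i := (aug_in (hyper G)).
Local Notation AG := (aug G).

Lemma aug_noin a (b : augV (hyper G)) : islat b -> edges AG a b = false.
Proof. case: b => [[v|F] pf] //= _; by case: a => [[v'|F'] pf']. Qed.

Lemma aug_cov (b : augV (hyper G)) : (exists v, b = i v) \/
   [/\ forall v, b <> i v, forall a, ~~ edges AG a b & forall a, ~~ bidir AG a b /\ ~~ bidir AG b a].
Proof.
case: (aug_cover b) => [h|[hl hn]]; [by left|right]; split => // a.
  by rewrite aug_noin.
by rewrite !bidir_single.
Qed.

Lemma aug_connect u w : connect (edges AG) (i u) (i w) = connect (edges G) u w.
Proof.
apply: (lat_connect (H1 := G) (H2 := AG) (@aug_in_inj _ _) aug_cov) => u0 w0 //.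
Qed.

Lemma connect_lat a (b : augV (hyper G)) : islat b -> connect (edges AG) a b -> a = b.
Proof.
move=> hb /connectP [s hp hbe]; subst b; elim/last_ind: s hp hb => [//|s c _].
rewrite rcons_path last_rcons => /andP [_ he] hc; by rewrite aug_noin in he.
Qed.

Lemma Sc_aug_img u w : (i u \in Sc AG (i w)) = (u \in Sc G w).
Proof. by rewrite !inSc !aug_connect. Qed.

Lemma Sc_aug_img2 x w : x \in Sc AG (i w) -> exists2 v, x = i v & v \in Sc G w.
Proof.
case: (aug_cover x) => [[v ->]|[hl _]]; first by rewrite Sc_aug_img; exists v.
rewrite inSc => /andP [_ h]; have := connect_lat hl h => hx.
by move: hl; rewrite -hx.
Qed.

Lemma Sc_aug_lat x (l : augV (hyper G)) : islat l -> x \in Sc AG l -> x = l.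
Proof. move=> hl; rewrite inSc => /andP [h _]; exact: connect_lat hl h. Qed.

Local Notation AA := (acy AG).

Lemma AA_edge_img u w : edges AA (i u) (i w) = edges (acy G) u w.
Proof.
apply/idP/idP.
  move/acy_edgeE => [h1 [w' /Sc_aug_img2 [v -> hv] he]].
  apply: (acy_edgeI (w' := v)) => //; by rewrite -Sc_aug_img.
move/acy_edgeE => [h1 [w' hw' he]].
apply: (acy_edgeI (w' := i w')); by rewrite ?Sc_aug_img.
Qed.

Lemma AA_noin a (l : augV (hyper G)) : islat l -> edges AA a l = false.
Proof.
move=> hl; apply/negP => /acy_edgeE [_ [w' hw' he]].
by rewrite (Sc_aug_lat hl hw') aug_noin in he.
Qed.

Lemma AA_lat_edge (l : augV (hyper G)) u : islat l -> edges AA l (i u) ->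
  exists F, [/\ val l = inr F, F \in maxH (hyper G) & exists2 a, a \in F & u \in Sc G a].
Proof.
case: l => [[v|F] pf] //= _ /acy_edgeE [_ [w' /Sc_aug_img2 [a -> ha] he]].
exists F; split => //; exists a => //; by rewrite Sc_sym.
Qed.

Lemma AA_lat_edgeI F (pf : aug_node (hyper G) (inr F)) a u : a \in F -> u \in Sc G a ->
  edges AA (exist _ (inr F) pf) (i u).
Proof.
move=> ha hu; apply: (acy_edgeI (w' := i a)).
- apply/negP; rewrite Sc_sym => /(Sc_aug_lat (l := exist _ (inr F) pf) isT) h; by have := congr1 val h.
- by rewrite Sc_aug_img Sc_sym.
- done.
Qed.

End AugG.

Lemma card1_eq (T : finType) (F : {set T}) a b : #|F| <= 1 -> a \in F -> b \in F -> a = b.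
Proof.
move=> hc ha hb; apply/eqP; apply/negPn/negP => hab.
have : #|[set a; b]| <= #|F| by apply: subset_leq_card; rewrite sub2set ha hb.
by rewrite cards2 hab; move/leq_trans => /(_ _ hc).
Qed.

Section Inst.
Variable V : finType.
Variable G : hedg V.
Local Notation i := (aug_in (hyper G)).
Local Notation AG := (aug G).
Local Notation AA := (acy AG).

Lemma bidir_acyI u w F a b : u != w -> F \in hyper G -> a \in F -> u \in Sc G a -> b \in F -> w \in Sc G b ->
  bidir (acy G) u w.
Proof.
move=> huw hF ha hu hb hw; rewrite /bidir huw /acy /= inE; apply/existsP; exists F.
rewrite hF sub2set /=; apply/andP; split; apply/bigcupP; by [exists a | exists b].
Qed.

Lemma bidir_acyE2 u w : bidir (acy G) u w ->
  exists F, [/\ F \in hyper G, exists2 a, a \in F & u \in Sc G a & exists2 b, b \in F & w \in Sc G b].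
Proof.
rewrite /bidir /acy /= inE => /andP [_ /existsP [F /andP [hF]]].
rewrite sub2set => /andP [/bigcupP [a ha hua] /bigcupP [b hb hwb]].
by exists F; split => //; [exists a | exists b].
Qed.

Lemma Hbi12_AA u w : bidir (acy G) u w ->
   exists l, [/\ forall v, l <> i v, edges AA l (i u) & edges AA l (i w)].
Proof.
move=> /bidir_acyE2 [F [hF [a ha hua] [b hb hwb]]].
have [F' hF' hsub] := maxH_ex hF.
have pf : aug_node (hyper G) (inr F') by [].
exists (exist _ (inr F') pf); split.
- by move=> v /(congr1 val).
- apply: (AA_lat_edgeI pf (a := a)) => //; exact: (subsetP hsub).
- apply: (AA_lat_edgeI pf (a := b)) => //; exact: (subsetP hsub).
Qed.

Lemma Hlat_AA l u w : (forall v, l <> i v) -> edges AA l (i u) -> edges AA l (i w) -> u != w -> bidir (acy G) u w.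
Proof.
move=> hl h1 h2 huw.
have hlat : islat l.
  case: (aug_cover l) => [[v hv]|[]] //; by case: (hl v).
have [F [e1 hF [a ha hua]]] := AA_lat_edge hlat h1.
have [F2 [e2 _ [b hb hwb]]] := AA_lat_edge hlat h2.
rewrite e1 in e2; case: e2 => e2; subst F2.
exact: (bidir_acyI huw (maxH_sub hF) ha hua hb hwb).
Qed.

Lemma bidir_AAE a b : bidir AA a b -> a != b /\ exists v, a \in Sc AG v /\ b \in Sc AG v.
Proof.
rewrite /bidir /acy /= inE => /andP [hab /existsP [F /andP [hF]]].
rewrite sub2set => /andP [/bigcupP [v1 h1 ha] /bigcupP [v2 h2 hb]].
split => //; exists v1; split => //.
rewrite inE in hF; by rewrite (card1_eq hF h1 h2).
Qed.

Lemma AA_lat_nobidir (l a : augV (hyper G)) : islat l -> ~~ bidir AA a l /\ ~~ bidir AA l a.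
Proof.
move=> hl.
have key : forall a b, islat b -> ~~ bidir AA a b /\ ~~ bidir AA b a.
  move=> a0 b0 hb; split; apply/negP => /bidir_AAE [hab [v [h1 h2]]].
    have ev : v = b0 by apply: (Sc_aug_lat hb); rewrite Sc_sym.
    subst v; by rewrite (Sc_aug_lat hb h1) eqxx in hab.
  have ev : v = b0 by apply: (Sc_aug_lat hb); rewrite Sc_sym.
  subst v; by rewrite (Sc_aug_lat hb h2) eqxx in hab.
exact: key.
Qed.

Theorem inst_acag (X Y Z : {set V}) :
  d_sep (acy G) X Y Z <-> d_sep (acag G) (aug_set (hyper G) X) (aug_set (hyper G) Y) (aug_set (hyper G) Z).
Proof.
apply: (thmL (H1 := acy G) (H2 := acag G) (@aug_in_inj _ _)).
- move=> b; case: (aug_cover b) => [h|[hl hn]]; [by left|right]; split => // a.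
    exact: (negbT (AA_noin a hl)).
  by rewrite /acag !bidir_single.
- exact: AA_edge_img.
- by move=> u w; rewrite /acag bidir_single.
- move=> u w h; right; exact: Hbi12_AA h.
- exact: Hlat_AA.
Qed.

Hypothesis hG : is_hedg G.

Theorem inst_acyaug (X Y Z : {set V}) :
  d_sep (acy G) X Y Z <-> d_sep AA (aug_set (hyper G) X) (aug_set (hyper G) Y) (aug_set (hyper G) Z).
Proof.
apply: (thmL (H1 := acy G) (H2 := AA) (@aug_in_inj _ _)).
- move=> b; case: (aug_cover b) => [h|[hl hn]]; [by left|right]; split => // a.
    exact: (negbT (AA_noin a hl)).
  exact: AA_lat_nobidir.
- exact: AA_edge_img.
- move=> u w /bidir_AAE [huw [v [h1 h2]]].
  case: (aug_cover v) => [[v0 hv]|[hl _]].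
    subst v; rewrite !Sc_aug_img in h1 h2.
    apply: (bidir_sc hG _ h1 h2); apply/negP => /eqP e; by rewrite e eqxx in huw.
  rewrite Sc_sym inSc in h1; case/andP: h1 => _ c1; have e := connect_lat hl c1.
  by move: hl; rewrite -e.
- move=> u w h; right; exact: Hbi12_AA h.
- exact: Hlat_AA.
Qed.

End Inst.

Theorem inst_augacy (V : finType) (G : hedg V) (X Y Z : {set V}) :
  d_sep (acy G) X Y Z <-> d_sep (aug (acy G)) (aug_set (hyper (acy G)) X)
                 (aug_set (hyper (acy G)) Y) (aug_set (hyper (acy G)) Z).
Proof.
apply: (thmL (H1 := acy G) (H2 := aug (acy G)) (@aug_in_inj _ _)).
- exact: aug_cov.
- by [].
- by move=> u w; rewrite /aug bidir_single.
- move=> u w /andP [huw hF]; right.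
  have [F' hF' hsub] := maxH_ex hF.
  have pf : aug_node (hyper (acy G)) (inr F') by [].
  exists (exist _ (inr F') pf); split.
  + by move=> v /(congr1 val).
  + by move: hsub; rewrite sub2set => /andP [].
  + by move: hsub; rewrite sub2set => /andP [].
- move=> [[v|F] pf] u w hl //=; first by case: (hl v); apply: val_inj.
  move=> hu0 hw0 huw; have hu : u \in F := hu0; have hw : w \in F := hw0; rewrite /bidir huw /=.
  have hF := maxH_sub pf; move: hF; rewrite /acy /= !inE => /existsP [F0 /andP [h0 hs]].
  apply/existsP; exists F0; rewrite h0 /=; apply: subset_trans hs; by rewrite sub2set hu hw.
Qed.

Unset Implicit Arguments.

Theorem mainTheorem7 (V : finType) (G : hedg V) (X Y Z : {set V}) :
  is_hedg G ->
  [<-> sigma_sep G X Y Z;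
       sigma_sep (aug G) (aug_set (hyper G) X) (aug_set (hyper G) Y)
                 (aug_set (hyper G) Z);
       d_sep (acy G) X Y Z;
       d_sep (acag G) (aug_set (hyper G) X) (aug_set (hyper G) Y)
                 (aug_set (hyper G) Z);
       d_sep (acy (aug G)) (aug_set (hyper G) X) (aug_set (hyper G) Y)
                 (aug_set (hyper G) Z);
       d_sep (aug (acy G)) (aug_set (hyper (acy G)) X)
                 (aug_set (hyper (acy G)) Y) (aug_set (hyper (acy G)) Z)].
Proof.
move=> hG.
have e02 := thmB X Y Z hG.
have e14 := thmB (aug_set (hyper G) X) (aug_set (hyper G) Y) (aug_set (hyper G) Z) (single_hedg (aug_edges G)).
have e23 := inst_acag G X Y Z.
have e24 := inst_acyaug hG X Y Z.
have e25 := inst_augacy G X Y Z.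
tfae.
- by move/e02/e24/e14.
- by move/e14/e24.
- by move/e23.
- by move/e23/e24.
- by move/e24/e25.
- by move/e25/e02.
Qed.
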